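(* Let $G$ be a finite simple connected graph and $H$ a connected subgraph of $G$. If $\beta(H)=n(H)-t$ and $d_H(u,v)=d_G(u,v)$ for all pairs of vertices $u,v$ of $H$, then $\beta(G)\le n(G)-t$.
   Context: $n(X)$ denotes the number of vertices of a graph $X$ and $d_X$ its shortest-path distance. For an ordered set $W=\{w_1,\dots,w_k\}$ of vertices of a connected graph $X$, $r(v|W)=(d_X(v,w_1),\dots,d_X(v,w_k))$; $W$ is a resolving set if distinct vertices have distinct vectors $r(\cdot|W)$, and $\beta(X)$, the metric dimension, is the minimum size of a resolving set. *)

(* Defs.v *)
(* A graph is given by a vertex set V : {set T} inside a
   finite type T and a boolean edge relation e : rel T whose edges lie in V.
   The whole graph G uses V = [set: T]. *)
From mathcomp Require Import all_boot.
Set Implicit Arguments. Unset Strict Implicit. Unset Printing Implicit Defensive.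

Section Graphs.
Variable T : finType.

Definition simple_graph (e : rel T) : Prop := symmetric e /\ irreflexive e.

Fixpoint reachn (e : rel T) (n : nat) (x y : T) : bool :=
  if n is n'.+1 then (x == y) || [exists z, e x z && reachn e n' z y]
  else x == y.

(* shortest-path distance: least n with a walk of length <= n; in a connected
   graph on at most #|T| vertices this is < #|T|, so searching 0..#|T|-1
   suffices (the value #|T| is returned for unreachable pairs, never used). *)
Definition gdist (e : rel T) (x y : T) : nat :=
  find (fun n => reachn e n x y) (iota 0 #|T|).

Definition gconnected (V : {set T}) (e : rel T) : Prop :=
  forall u v, u \in V -> v \in V -> connect e u v.

Definition resolving (V : {set T}) (e : rel T) (W : {set T}) : bool :=
  (W \subset V) &&
  [forall u in V, forall v in V,
     [forall w in W, gdist e u w == gdist e v w] ==> (u == v)].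

Definition metric_dim (V : {set T}) (e : rel T) : nat :=
  \big[minn/#|T|]_(W : {set T} | resolving V e W) #|W|.

Definition subgraph (e : rel T) (S : {set T}) (eH : rel T) : Prop :=
  symmetric eH /\
  (forall x y, eH x y -> [/\ x \in S, y \in S & e x y]).

End Graphs.

(* Main.v *)
Require Import Defs.
From mathcomp Require Import all_boot.
From mathcomp Require Import zify.
From Stdlib Require Import Lia.

Lemma gdist0 (T : finType) (e : rel T) u v : gdist e u v = 0 -> u = v.
Proof.
rewrite /gdist.
have : 0 < #|T| by apply/card_gt0P; exists u.
case: #|T| => // n _ /=.
by case: (u =P v).
Qed.

Lemma gdist_refl (T : finType) (e : rel T) u : gdist e u u = 0.
Proof.
rewrite /gdist.
have : 0 < #|T| by apply/card_gt0P; exists u.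
by case: #|T| => // n _ /=; rewrite eqxx.
Qed.

Lemma bigmin_le (T : finType) (P : pred {set T}) (F : {set T} -> nat) d W :
  P W -> \big[minn/d]_(X | P X) F X <= F W.
Proof.
move=> PW; rewrite unlock.
have : W \in index_enum {set T} by rewrite mem_index_enum.
elim: (index_enum _) => //= x s IH; rewrite in_cons => /orP [/eqP <- | Ws].
  by rewrite PW geq_minl.
case: (P x); last exact: IH.
by rewrite geq_min IH ?orbT.
Qed.

Lemma bigmin_cases (T : finType) (P : pred {set T}) d :
  let m := \big[minn/d]_(X | P X) #|X| in
  m = d \/ exists2 W, P W & #|W| = m.
Proof.
apply: (big_ind (fun x => x = d \/ exists2 W, P W & #|W| = x)).
- by left.
- move=> x y Hx Hy; rewrite /minn; case: ifP => _; [exact: Hx | exact: Hy].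
- by move=> W PW; right; exists W.
Qed.

Lemma bigmin_led (T : finType) (P : pred {set T}) :
  \big[minn/#|T|]_(X | P X) #|X| <= #|T|.
Proof.
apply: (big_ind (fun x => x <= #|T|)) => //.
by move=> x y Hx _; rewrite geq_min Hx.
by move=> i _; apply: max_card.
Qed.

Theorem proposition2p5 (T : finType) (e : rel T) (S : {set T}) (eH : rel T)
    (t : nat) :
  simple_graph e -> gconnected [set: T] e ->
  subgraph e S eH -> gconnected S eH ->
  metric_dim S eH + t = #|S| ->
  (forall u v, u \in S -> v \in S -> gdist eH u v = gdist e u v) ->
  metric_dim [set: T] e + t <= #|T|.
Proof.
move=> _ _ _ _ Hm Hd.
case: (@bigmin_cases T (resolving S eH) #|T|) => [Heq | [W RW HW]].
- have := @bigmin_led T (resolving [set: T] e).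
  rewrite /metric_dim in Hm; rewrite Heq in Hm.
  have := max_card S; rewrite -Hm /metric_dim => H1 H2.
  have -> : t = 0 by move: H1; rewrite -{2}[#|T|]addn0 leq_add2l leqn0 => /eqP.
  by rewrite addn0.
- rewrite /metric_dim in Hm; rewrite -HW in Hm.
  move/andP: RW => [WS /'forall_in_'forall_in_implyP RW].
  set W' := W :|: ~: S.
  have RW' : resolving [set: T] e W'.
    rewrite /resolving subsetT /=.
    apply/'forall_in_'forall_in_implyP => u _ v _ /'forall_in_eqP Huv.
    case uS: (u \in S); last first.
      have uW : u \in W' by rewrite in_setU in_setC uS orbT.
      by have := Huv u uW; rewrite gdist_refl => /esym /gdist0 ->.
    case vS: (v \in S); last first.
      have vW : v \in W' by rewrite in_setU in_setC vS orbT.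
      by have := Huv v vW; rewrite gdist_refl => /gdist0 ->.
    apply: (RW u uS v vS); apply/'forall_in_eqP => w wW.
    have wS : w \in S by apply: (subsetP WS).
    by rewrite !Hd //; apply: Huv; rewrite in_setU wW.
  have := @bigmin_le T _ (fun X => #|X|) #|T| _ RW'.
  rewrite -/(metric_dim [set: T] e) => Hle.
  have HcW' : #|W'| = #|W| + #|~: S|.
    rewrite /W' cardsU.
    have -> : W :&: ~: S = set0.
      apply/setP => x; rewrite !inE.
      by apply/negbTE; apply/andP=> [[/(subsetP WS) -> ]].
    by rewrite cards0 subn0.
  have HcS := cardsC S.
  rewrite -HcS.
  apply: (leq_trans (leq_add Hle (leqnn t))).
  rewrite HcW' -Hm; lia.
Qed.
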